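(* Let $(G,\cdot)$ and $(H,\circ)$ be WIPLs and let $(A,B,C)$ be an isotopism from $(G,\cdot)$ to $(H,\circ)$. Then for all $x\in G$, $$J_\lambda R_x J_\rho B=C J_\lambda' R_{xA}' J_\rho' \quad\text{and}\quad J_\rho L_x J_\lambda A=C J_\rho' L_{xB}' J_\lambda'.$$
   Context: Maps are written on the right of their arguments ($xU$) and composed left to right: $UV$ means first apply $U$, then $V$. For a loop $(L,\cdot)$ with identity $e$, $x^\rho$ and $x^\lambda$ denote the right and left inverses of $x$ ($x x^\rho=e=x^\lambda x$), and $J_\rho:x\mapsto x^\rho$, $J_\lambda:x\mapsto x^\lambda$, $L_x:y\mapsto xy$, $R_x:y\mapsto yx$. For the loop $(H,\circ)$ (identity $e'$) the corresponding maps are denoted $J_\rho'$ ($y\mapsto y^{\rho'}$), $J_\lambda'$ ($y\mapsto y^{\lambda'}$), $L_y':z\mapsto y\circ z$, $R_y':z\mapsto z\circ y$. $L$ is a weak inverse property loop (WIPL) if $xy\cdot z=e$ implies $x\cdot yz=e$ for all $x,y,z\in L$. A triple $(U,V,W)$ of bijections $G\to H$ between loops $(G,\cdot)$ and $(H,\circ)$ is an isotopism if $xU\circ yV=(x\cdot y)W$ for all $x,y\in G$. *)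

(* Defs.v *)
From Stdlib Require Import Program.Basics.

Record loop := Loop {
  carrier :> Type;
  op : carrier -> carrier -> carrier;
  e : carrier;
  ldiv : carrier -> carrier -> carrier;
  rdiv : carrier -> carrier -> carrier;
  op_e_l : forall x, op e x = x;
  op_e_r : forall x, op x e = x;
  ldiv_spec : forall a b, op a (ldiv a b) = b;
  ldiv_uniq : forall a b x, op a x = b -> x = ldiv a b;
  rdiv_spec : forall a b, op (rdiv b a) a = b;
  rdiv_uniq : forall a b y, op y a = b -> y = rdiv b a
}.

Arguments op {l} _ _.
Arguments e {l}.

Definition rinv {L : loop} (x : L) : L := ldiv L x e.
Definition linv {L : loop} (x : L) : L := rdiv L e x.

Definition Jrho {L : loop} : L -> L := fun x => rinv x.
Definition Jlam {L : loop} : L -> L := fun x => linv x.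
Definition Lmap {L : loop} (x : L) : L -> L := fun y => op x y.
Definition Rmap {L : loop} (x : L) : L -> L := fun y => op y x.

Definition WIPL (L : loop) : Prop :=
  forall x y z : L, op (op x y) z = e -> op x (op y z) = e.

Definition bijective {A B : Type} (f : A -> B) : Prop :=
  exists g : B -> A, (forall a, g (f a) = a) /\ (forall b, f (g b) = b).

Definition isotopism {G H : loop} (U V W : G -> H) : Prop :=
  bijective U /\ bijective V /\ bijective W /\
  forall x y : G, op (U x) (V y) = W (op x y).

(* Left-to-right composition: (f ;; g) x = g (f x)  (maps act on the right) *)
Definition seqc {A B C : Type} (f : A -> B) (g : B -> C) : A -> C :=
  fun x => g (f x).
Infix ";;" := seqc (at level 40, left associativity).

(* Main.v *)
Require Import Defs.

Lemma rinv_linv (L : loop) (y : L) : rinv (linv y) = y.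
Proof. symmetry. unfold rinv, linv. apply ldiv_uniq. apply rdiv_spec. Qed.

Lemma linv_rinv (L : loop) (y : L) : linv (rinv y) = y.
Proof. symmetry. unfold rinv, linv. apply rdiv_uniq. apply ldiv_spec. Qed.

Lemma L1 (L : loop) : WIPL L -> forall x y : L,
  rinv (op (linv y) x) = ldiv L x y.
Proof.
  intros W x y. apply ldiv_uniq.
  assert (H1 : op (linv y) (op x (rinv (op (linv y) x))) = e).
  { apply W. unfold rinv. apply ldiv_spec. }
  apply ldiv_uniq in H1. fold (rinv (linv y)) in H1.
  rewrite rinv_linv in H1. exact H1.
Qed.

Lemma L2 (L : loop) : WIPL L -> forall x y : L,
  linv (op x (rinv y)) = rdiv L y x.
Proof.
  intros W x y. apply rdiv_uniq.
  set (v := linv (op x (rinv y))).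
  set (d := rinv (op v x)).
  assert (H1 : op v (op x d) = e).
  { apply W. unfold d, rinv. apply ldiv_spec. }
  assert (H2 : op v (op x (rinv y)) = e).
  { unfold v, linv. apply rdiv_spec. }
  apply ldiv_uniq in H1. apply ldiv_uniq in H2.
  assert (H3 : op x d = op x (rinv y)) by congruence.
  assert (Hd : d = rinv y).
  { rewrite (ldiv_uniq _ _ _ _ H3). symmetry. apply ldiv_uniq. reflexivity. }
  assert (H4 : op (op v x) (rinv y) = e).
  { rewrite <- Hd. unfold d, rinv. apply ldiv_spec. }
  apply rdiv_uniq in H4. fold (linv (rinv y)) in H4.
  rewrite linv_rinv in H4. exact H4.
Qed.

Theorem mainTheorem7 (G H : loop) (A B C : G -> H) :
  WIPL G -> WIPL H -> isotopism A B C ->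
  forall x : G,
    (forall y : G, (Jlam ;; Rmap x ;; Jrho ;; B) y
                   = (C ;; Jlam ;; Rmap (A x) ;; Jrho) y) /\
    (forall y : G, (Jrho ;; Lmap x ;; Jlam ;; A) y
                   = (C ;; Jrho ;; Lmap (B x) ;; Jlam) y).
Proof.
  intros WG WH [_ [_ [_ Hiso]]] x. split; intro y;
  unfold seqc, Jlam, Jrho, Rmap, Lmap.
  - rewrite (L1 G WG), (L1 H WH). apply ldiv_uniq.
    rewrite Hiso, ldiv_spec. reflexivity.
  - rewrite (L2 G WG), (L2 H WH). apply rdiv_uniq.
    rewrite Hiso, rdiv_spec. reflexivity.
Qed.
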